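(* Let $n\in\mathbb{N}$, let $\alpha_1,\dots,\alpha_n\ge0$, and let $U,V_1,\dots,V_n$ be independent nonnegative random variables with densities $f_U,f_{V_1},\dots,f_{V_n}$. Set $Z_i=\alpha_iU+V_i$ and let $X_1,\dots,X_n$ be random variables which, conditionally on $(U,V_1,\dots,V_n)$, are independent with $X_i$ Poisson distributed with mean $Z_i$. Then for all $x_1,\dots,x_n\in\mathbb{N}_0$, $$P(X_1=x_1,\dots,X_n=x_n)=\frac{1}{x_1!\cdots x_n!}\sum_{j_1=0}^{x_1}\cdots\sum_{j_n=0}^{x_n}\binom{x_1}{j_1}\cdots\binom{x_n}{j_n}\alpha_1^{j_1}\cdots\alpha_n^{j_n}\,\mathbb{E}\big(U^{j_1+\dots+j_n}e^{-(\alpha_1+\dots+\alpha_n)U}\big)\prod_{k=1}^n\mathbb{E}\big(V_k^{x_k-j_k}e^{-V_k}\big).$$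
   Context: This is the Poisson mixture model of random-additive-effect type. Conventions: $0^0=1$. *)

(* Defs.v *)
From HB Require Import structures.
From mathcomp Require Import all_boot all_order all_algebra.
From mathcomp Require Import all_classical all_reals all_analysis.
Set Implicit Arguments. Unset Strict Implicit. Unset Printing Implicit Defensive.
Import Order.TTheory GRing.Theory Num.Theory.
Local Open Scope classical_set_scope.
Local Open Scope ring_scope.

(* Poisson probability mass function with mean z >= 0, convention 0^0 = 1:
   pois z k = z^k / k! * e^{-z}.  (The library's poisson_pmf is 1 at rate 0
   for every k, which is not the Poisson(0) pmf, so we do not use it.) *)
Definition pois {R : realType} (z : R) (k : nat) : R :=
  z ^+ k / (k`!)%:R * expR (- z).

Definition UV {T : Type} {R : realType} (n : nat) (U : T -> R)
  (V : 'I_n -> T -> R) (i : 'I_n.+1) : T -> R :=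
  if unlift ord0 i is Some k then V k else U.

Definition mutually_independent {d} {T : measurableType d} {R : realType}
  (P : probability T R) (m : nat) (W : 'I_m -> T -> R) : Prop :=
  forall B : 'I_m -> set R, (forall i, measurable (B i)) ->
    P (\bigcap_(i in [set: 'I_m]) (W i @^-1` B i)) = (\prod_(i < m) P (W i @^-1` B i))%E.

Definition has_density {d} {T : measurableType d} {R : realType}
  (P : probability T R) (Y : T -> R) (f : R -> R) : Prop :=
  measurable_fun setT f /\ (forall x, 0 <= f x) /\
  forall B : set R, measurable B ->
    P (Y @^-1` B) = (\int[@lebesgue_measure R]_(x in B) (f x)%:E)%E.

Definition generated_events {T : Type} {R : realType} (m : nat)
  (W : 'I_m -> T -> R) : set (set T) :=
  <<s [set A | exists i, exists2 B : set R, measurable B & A = W i @^-1` B] >>.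

(* Conditionally on the sigma-algebra G, the X i are independent with X i
   Poisson distributed of mean Z i:  for every event A in G and every x,
   P(A /\ X = x) = E[ 1_A * prod_i pois (Z i) (x i) ]. *)
Definition cond_indep_poisson {d} {T : measurableType d} {R : realType}
  (P : probability T R) (G : set (set T)) (n : nat)
  (Z : 'I_n -> T -> R) (X : 'I_n -> T -> nat) : Prop :=
  forall (A : set T) (x : 'I_n -> nat), G A ->
    P (A `&` [set t | forall i, X i t = x i]) =
    (\int[P]_(t in A) (\prod_(i < n) pois (Z i t) (x i))%:E)%E.

(* Main.v *)
Require Import Defs.
From HB Require Import structures.
From mathcomp Require Import all_boot all_order all_algebra.
From mathcomp Require Import all_classical all_reals all_analysis.
From mathcomp Require Import measurable_realfun.
From mathcomp Require Import ring lra.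
Import Order.TTheory GRing.Theory Num.Theory.
Local Open Scope classical_set_scope.
Local Open Scope ring_scope.
Set Implicit Arguments. Unset Strict Implicit. Unset Printing Implicit Defensive.
Import HBNNSimple.
Lemma simple_int_sum d (T : measurableType d) (R : realType)
  (P : {measure set T -> \bar R}) (G W : T -> R) (s : {nnsfun R >-> R}) :
  measurable_fun setT G -> (forall t, 0 <= G t) -> measurable_fun setT W ->
  (\int[P]_t (G t * s (W t))%:E =
   \sum_(r \in range s) r%:E * \int[P]_t (G t * \1_(s @^-1` [set r]) (W t))%:E)%E.
Proof.
move=> mG G0 mW.
have fr : finite_set (range s) by exact: fimfunP.
have mI r : measurable_fun setT (fun t => \1_(s @^-1` [set r]) (W t) : R).
  by apply: measurableT_comp.
under eq_integral => t _ do rewrite fimfunE mulr_fsumr -fsumEFin //.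
rewrite ge0_integral_fsum //; last first.
  move=> r t _; rewrite lee_fin mulr_ge0 // .
  rewrite indicE; case: (boolP (_ \in _)) => [/[!inE] /= <-|]; last by rewrite mulr0.
  by rewrite mulr1.
- move=> r; apply/measurable_EFinP; apply: measurable_funM => //.
  by apply: measurable_funM.
- apply: eq_fsbigr => r /[!inE] -[y _ <-].
  under eq_integral do rewrite mulrCA EFinM.
  rewrite ge0_integralZl //.
  + by apply/measurable_EFinP; apply: measurable_funM.
  + by move=> t _; rewrite lee_fin mulr_ge0.
  + by rewrite lee_fin.
Qed.
Lemma transfer d (T : measurableType d) (R : realType)
  (P : {measure set T -> \bar R}) (G W : T -> R) (c : \bar R) :
  measurable_fun setT G -> (forall t, 0 <= G t) -> measurable_fun setT W ->
  c \is a fin_num -> (0 <= c)%E ->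
  (forall B, measurable B ->
    \int[P]_t (G t * \1_B (W t))%:E = c * \int[P]_t (\1_B (W t))%:E)%E ->
  forall h : R -> R, measurable_fun setT h -> (forall y, 0 <= h y) ->
  (\int[P]_t (G t * h (W t))%:E = c * \int[P]_t (h (W t))%:E)%E.
Proof.
move=> mG G0 mW cfin c0 hB h mh h0.
have mh' : measurable_fun setT (EFin \o h) by apply/measurable_EFinP.
pose s := nnsfun_approx measurableT mh'.
have key n : (\int[P]_t (G t * s n (W t))%:E = c * \int[P]_t (s n (W t))%:E)%E.
  rewrite simple_int_sum //.
  under [X in (_ = _ * X)%E]eq_integral do rewrite -[s n _]mul1r.
  rewrite (@simple_int_sum _ _ _ P (fun _ => 1) W (s n)) //.
  have fr : finite_set (range (s n)) by exact: fimfunP.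
  rewrite !fsbig_finite //= big_seq [in RHS]big_seq ge0_sume_distrr; last first.
    move=> r; rewrite in_fset_set // inE => -[y _ <-].
    by rewrite mule_ge0 // ?lee_fin // integral_ge0 // => t _; rewrite lee_fin mul1r.
  apply: eq_bigr => r _.
  rewrite hB; last by rewrite -[X in measurable X]setTI; apply: measurable_funP.
  by under [X in (_ = _ * (_ * X))%E]eq_integral do rewrite mul1r; rewrite muleCA.
have ms n : measurable_fun setT (s n : R -> R) by [].
have cv1 t : (fun n => (G t * s n (W t))%:E) @ \oo --> (G t * h (W t))%:E.
  rewrite EFinM; under eq_fun do rewrite EFinM.
  apply: cvgeZl => //; apply: (@cvg_nnsfun_approx _ _ _ _ measurableT _ mh') => // y _; exact: h0.
have cv2 t : (fun n => (s n (W t))%:E) @ \oo --> (h (W t))%:E.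
  by apply: (@cvg_nnsfun_approx _ _ _ _ measurableT _ mh') => // y _; exact: h0.
transitivity (\int[P]_t limn (fun n => (G t * s n (W t))%:E))%E.
  by apply: eq_integral => t _; apply/esym/cvg_lim.
transitivity (c * \int[P]_t limn (fun n => (s n (W t))%:E))%E; last first.
  by congr (_ * _)%E; apply: eq_integral => t _; apply/cvg_lim.
have nd t m k : (m <= k)%N -> s m (W t) <= s k (W t).
  by move=> mk; exact/lefP/nd_nnsfun_approx.
have msW n : measurable_fun setT (fun t => s n (W t)) by apply: measurableT_comp.
rewrite monotone_convergence //; first last.
- by move=> t _ m k mk; rewrite lee_fin; apply: ler_wpM2l => //; exact: nd.
- by move=> n t _; rewrite lee_fin mulr_ge0.
- by move=> n; apply/measurable_EFinP; apply: measurable_funM.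
rewrite monotone_convergence //; first last.
- by move=> t _ m k mk; rewrite lee_fin nd.
- by move=> n t _; rewrite lee_fin.
- by move=> n; apply/measurable_EFinP.
under eq_fun do rewrite key.
apply: limeMl => //.
apply: ereal_nondecreasing_is_cvgn => m k mk; apply: ge0_le_integral => //.
- by move=> t _; rewrite lee_fin.
- by apply/measurable_EFinP.
- by apply/measurable_EFinP.
- by move=> t _; rewrite lee_fin nd.
Qed.
Lemma int_indic_comp d (T : measurableType d) (R : realType)
  (P : {measure set T -> \bar R}) (W : T -> R) (B : set R) :
  measurable_fun setT W -> measurable B ->
  (\int[P]_t (\1_B (W t))%:E = P (W @^-1` B))%E.
Proof.
move=> mW mB.
have mA : measurable (W @^-1` B) by rewrite -[X in measurable X]setTI; exact: mW.
transitivity (\int[P]_t (\1_(W @^-1` B) t)%:E)%E; last first.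
  by rewrite integral_indic // setIT.
by apply: eq_integral => t _; rewrite !indicE.
Qed.

Lemma prod_indic (I : finType) (T : Type) (R' : realType) (A : I -> set T) (t : T) :
  \prod_(i : I) (\1_(A i) t : R') = \1_(\big[setI/setT]_(i : I) A i) t.
Proof.
elim/big_rec2: _ => [|i y F _ ->]; first by rewrite indicT.
by rewrite indicI.
Qed.
Lemma indep_base d (T : measurableType d) (R : realType)
  (P : probability T R) (m : nat) (W : 'I_m -> T -> R) (B : 'I_m -> set R) :
  (forall i, measurable_fun setT (W i)) -> mutually_independent P W ->
  (forall i, measurable (B i)) ->
  (\int[P]_t (\prod_i \1_(B i) (W i t))%:E =
   \prod_i \int[P]_t (\1_(B i) (W i t))%:E)%E.
Proof.
move=> mW hind mB.
have mA i : measurable (W i @^-1` B i).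
  by rewrite -[X in measurable X]setTI; exact: mW.
under [RHS]eq_bigr => i _ do rewrite int_indic_comp //.
rewrite -hind //.
have e t : (\prod_i \1_(B i) (W i t) = \1_(\big[setI/setT]_i (W i @^-1` B i)) t :> R)%R.
  rewrite -prod_indic; apply: eq_bigr => i _; by rewrite !indicE.
under eq_integral => t _ do rewrite e.
rewrite integral_indic; last exact: bigsetI_measurable.
rewrite setIT; congr (P _).
rewrite -bigcap_seq; apply/seteqP; split => t /= Ht i _; apply: Ht => //=.
  by rewrite mem_index_enum.
exact: measurableT.
Qed.
Lemma indep_prod d (T : measurableType d) (R : realType)
  (P : probability T R) (m : nat) (W : 'I_m -> T -> R) :
  (forall i, measurable_fun setT (W i)) -> mutually_independent P W ->
  forall f : 'I_m -> R -> R, (forall i, measurable_fun setT (f i)) ->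
  (forall i y, 0 <= f i y) ->
  (forall i, (\int[P]_t (f i (W i t))%:E)%E \is a fin_num) ->
  (\int[P]_t (\prod_i f i (W i t))%:E = \prod_i \int[P]_t (f i (W i t))%:E)%E.
Proof.
move=> mW hind.
suff S : forall k, (k <= m)%N -> forall f : 'I_m -> R -> R,
  (forall i, measurable_fun setT (f i)) -> (forall i y, 0 <= f i y) ->
  (forall i, (\int[P]_t (f i (W i t))%:E)%E \is a fin_num) ->
  (forall i : 'I_m, (k <= i)%N -> exists2 B, measurable B & f i = \1_B) ->
  (\int[P]_t (\prod_i f i (W i t))%:E = \prod_i \int[P]_t (f i (W i t))%:E)%E.
  move=> f mf f0 ffin; apply: (S m) => // i; by rewrite leqNgt ltn_ord.
elim=> [_|k IH km] f mf f0 ffin hB.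
  have hB' : forall i, exists B : set R, measurable B /\ f i = \1_B.
    by move=> i; have [B mB ->] := hB i (leq0n _); exists B.
  have [B HB] := choice hB'.
  have -> : f = fun i => \1_(B i) by apply/funext => i; case: (HB i).
  apply: indep_base => // i; by case: (HB i).
pose i0 : 'I_m := Ordinal km.
pose G t := (\prod_(i | i != i0) f i (W i t))%R.
pose c := (\prod_(i | i != i0) \int[P]_t (f i (W i t))%:E)%E.
have mG : measurable_fun setT G.
  rewrite /G; under eq_fun do rewrite big_mkcond /=.
  apply: measurable_prod => i _; case: (i != i0) => //.
  exact: measurableT_comp.
have G0 t : 0 <= G t by apply: prodr_ge0 => i _.
have cfin : c \is a fin_num by apply: prode_fin_num.
have c0 : (0 <= c)%E by apply: prode_ge0 => i _; apply: integral_ge0 => t _; rewrite lee_fin.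
have key := @transfer _ _ _ P G (W i0) c mG G0 (mW i0) cfin c0.
rewrite [in RHS](bigD1 i0) //=.
under eq_integral do rewrite (bigD1 i0) //= -/(G _) mulrC.
rewrite (key _ (f i0)) //; first by rewrite muleC.
move=> B mB.
pose f' := fun i => if i == i0 then \1_B else f i.
have mf' : forall i, measurable_fun setT (f' i).
  by move=> i; rewrite /f'; case: (i == i0) => //; exact: measurable_indic.
have f'0 : forall i y, 0 <= f' i y by move=> i y; rewrite /f'; case: (i == i0).
have f'fin : forall i, (\int[P]_t (f' i (W i t))%:E)%E \is a fin_num.
  move=> i; rewrite /f'; case: (i == i0) => //.
  rewrite int_indic_comp //; apply: fin_num_measure.
  by rewrite -[X in measurable X]setTI; exact: mW.
have hB' : forall i : 'I_m, (k <= i)%N -> exists2 B0, measurable B0 & f' i = \1_B0.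
  move=> i ki; rewrite /f'; case: eqP => [_|/eqP ni0]; first by exists B.
  apply: hB; rewrite ltn_neqAle ki andbT; apply: contra ni0 => /eqP ki0.
  by apply/eqP/val_inj.
have := IH (ltnW km) f' mf' f'0 f'fin hB'.
rewrite [in RHS](bigD1 i0) //= /f' eqxx.
under eq_integral do rewrite (bigD1 i0) //= eqxx.
under eq_integral do under eq_bigr => i /negbTE -> do [].
under [in RHS]eq_bigr => i /negbTE -> do [].
rewrite -/c muleC.
under eq_integral do rewrite -/(G _) mulrC.
by [].
Qed.
Lemma pois_expand (R : realType) n (alpha : 'I_n -> R) (u : R) (v : 'I_n -> R)
  (x : 'I_n -> nat) :
  \prod_(i < n) pois (alpha i * u + v i) (x i) =
  (\prod_(i < n) ((x i)`!)%:R)^-1 *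
  \sum_(j : {ffun 'I_n -> 'I_(\max_(i < n) x i).+1} | [forall i, (j i <= x i)%N])
     ((\prod_(i < n) ('C(x i, j i)%:R * alpha i ^+ j i)) *
      (u ^+ (\sum_(i < n) (j i : nat)) * expR (- (\sum_(i < n) alpha i) * u)) *
      \prod_(k < n) (v k ^+ (x k - j k) * expR (- v k))).
Proof.
set M := \max_(i < n) x i.
have hx i : (x i < M.+1)%N by rewrite ltnS; exact: (leq_bigmax i).
pose F i (j : 'I_M.+1) := ('C(x i, j)%:R * alpha i ^+ j) *
   (u ^+ j * expR (- alpha i * u)) * (v i ^+ (x i - j) * expR (- v i)).
have hp i : pois (alpha i * u + v i) (x i) =
    ((x i)`!)%:R^-1 * \sum_(j < M.+1 | (j <= x i)%N) F i j.
  rewrite /pois addrC exprDn (big_ord_widen M.+1 (fun j => (v i ^+ (x i - j) * (alpha i * u) ^+ j) *+ 'C(x i, j)) (hx i)) /=.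
  rewrite !mulr_suml mulr_sumr.
  apply: eq_big => j.
    by rewrite ltnS.
  move=> _; rewrite /F opprD expRD mulNr; set a := expR _; set b := expR _.
  rewrite -mulr_natr exprMn; ring.
under eq_bigr do rewrite hp.
rewrite big_split /= prodfV; congr (_ * _).
rewrite bigA_distr_big_dep /=.
apply: eq_big => [f|f _].
  by apply/familyP/forallP => H i; have := H i.
rewrite /F big_split big_split /= big_split /=.
congr (_ * _ * _).
rewrite big_split /= prodrXr -expR_sum; congr (_ * expR _).
by rewrite mulNr mulr_suml -sumrN; apply: eq_bigr => i _; rewrite mulNr.
Qed.
Lemma indep_UV d (T : measurableType d) (R : realType)
  (P : probability T R) (n : nat) (U : T -> R) (V : 'I_n -> T -> R)
  (g : R -> R) (h : 'I_n -> R -> R) :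
  measurable_fun setT U -> (forall i, measurable_fun setT (V i)) ->
  mutually_independent P (UV U V) ->
  measurable_fun setT g -> (forall y, 0 <= g y) ->
  (\int[P]_t (g (U t))%:E)%E \is a fin_num ->
  (forall k, measurable_fun setT (h k)) -> (forall k y, 0 <= h k y) ->
  (forall k, (\int[P]_t (h k (V k t))%:E)%E \is a fin_num) ->
  (\int[P]_t (g (U t) * \prod_k h k (V k t))%:E =
   \int[P]_t (g (U t))%:E * \prod_k \int[P]_t (h k (V k t))%:E)%E.
Proof.
move=> mU mV hind mg g0 gfin mh h0 hfin.
pose f (i : 'I_n.+1) : R -> R := if unlift ord0 i is Some k then h k else g.
have mW i : measurable_fun setT (UV U V i).
  by rewrite /UV; case: (unlift ord0 i).
have := @indep_prod _ _ _ P n.+1 (UV U V) mW hind f.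
rewrite big_ord_recl /= /f /UV unlift_none.
under eq_bigr do rewrite liftK.
under eq_integral do rewrite big_ord_recl /= unlift_none.
under eq_integral do under eq_bigr do rewrite liftK.
apply.
- by move=> i; case: (unlift ord0 i).
- by move=> i y; case: (unlift ord0 i).
- by move=> i; case: (unlift ord0 i).
Qed.
Lemma pow_exp_bound (R : realType) (c y : R) m : 0 < c -> 0 <= y ->
  y ^+ m * expR (- c * y) <= m`!%:R / c ^+ m.
Proof.
move=> c0 y0.
have cy0 : 0 <= c * y by rewrite mulr_ge0 // ltW.
have key : (c * y) ^+ m / m`!%:R <= expR (c * y).
  case: m => [|m].
    by rewrite expr0 fact0 divr1; apply: le_trans (expR_ge1Dx _); lra.
  by apply: le_trans (expR_ge1Dxn _ cy0); lra.
have f0 : 0 < (m`!)%:R :> R by rewrite ltr0n fact_gt0.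
have e0 : 0 < expR (c * y) by exact: expR_gt0.
rewrite ler_pdivlMr ?exprn_gt0 // mulNr expRN.
rewrite ler_pdivrMr // in key.
rewrite exprMn in key.
by rewrite mulrAC ler_pdivrMr // mulrC [_ * expR _]mulrC.
Qed.

Lemma bounded_fin d (T : measurableType d) (R : realType)
  (P : probability T R) (F : T -> R) (M : R) :
  measurable_fun setT F -> (forall t, 0 <= F t) -> (forall t, F t <= M) ->
  (\int[P]_t (F t)%:E)%E \is a fin_num.
Proof.
move=> mF F0 FM.
rewrite ge0_fin_numE; last by apply: integral_ge0 => t _; rewrite lee_fin.
apply: (@le_lt_trans _ _ (\int[P]_t (cst M%:E t))%E).
  apply: ge0_le_integral => //; first [by move=> t _; rewrite lee_fin | by apply/measurable_EFinP].
by rewrite integral_cst //= probability_setT mule1 ltry.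
Qed.
Lemma term_eq d (T : measurableType d) (R : realType)
  (P : probability T R) (n : nat) (U : T -> R) (V : 'I_n -> T -> R)
  (coef A : R) (s : nat) (m : 'I_n -> nat) :
  measurable_fun setT U -> (forall i, measurable_fun setT (V i)) ->
  (forall t, 0 <= U t) -> (forall i t, 0 <= V i t) ->
  mutually_independent P (UV U V) ->
  0 <= coef -> 0 <= A -> (coef != 0 -> (s = 0)%N \/ 0 < A) ->
  (\int[P]_t (coef * (U t ^+ s * expR (- A * U t)) *
       \prod_(k < n) (V k t ^+ m k * expR (- V k t)))%:E =
   coef%:E * 'E_P[fun t => (U t ^+ s * expR (- A * U t))%R] *
   \prod_(k < n) 'E_P[fun t => (V k t ^+ m k * expR (- V k t))%R])%E.
Proof.
move=> mU mV U0 V0 hind c0 A0 hA.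
pose g (y : R) := `|y| ^+ s * expR (- A * `|y|).
pose h (k : 'I_n) (y : R) := `|y| ^+ m k * expR (- `|y|).
have mE (f : R -> R) : measurable_fun setT f -> measurable_fun setT (fun y => expR (f y)).
  by move=> mf; apply: measurableT_comp => //.
have mg : measurable_fun setT g.
  apply: measurable_funM; first exact: measurable_funX.
  by apply: mE; apply: measurable_funM => //; exact: measurable_cst.
have mh k : measurable_fun setT (h k).
  apply: measurable_funM; first exact: measurable_funX.
  by apply: mE; exact: measurableT_comp.
have g0 y : 0 <= g y by rewrite mulr_ge0 // expR_ge0.
have h0 k y : 0 <= h k y by rewrite mulr_ge0 // expR_ge0.
have mgU : measurable_fun setT (fun t => g (U t)) by exact: measurableT_comp.
have mhV k : measurable_fun setT (fun t => h k (V k t)) by exact: measurableT_comp.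
have mprod : measurable_fun setT (fun t => \prod_(k < n) h k (V k t)).
  by apply: measurable_prod => k _.
have eU t : g (U t) = U t ^+ s * expR (- A * U t) by rewrite /g ger0_norm.
have eV k t : h k (V k t) = V k t ^+ m k * expR (- V k t) by rewrite /h ger0_norm.
under eq_integral do rewrite -mulrA EFinM.
rewrite ge0_integralZl //; first last.
- move=> t _; rewrite lee_fin -eU; apply: mulr_ge0 => //.
  by apply: prodr_ge0 => k _; rewrite -eV.
- apply/measurable_EFinP; under eq_fun do rewrite -eU.
  under eq_fun do under eq_bigr do rewrite -eV.
  exact: measurable_funM.
have [->|cn0] := eqVneq coef 0; first by rewrite !mul0e.
rewrite -muleA; congr (_ * _)%E.
rewrite expectation.unlock.
under [in LHS]eq_integral do rewrite -eU.
under [in LHS]eq_integral do under eq_bigr do rewrite -eV.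
under [X in (_ = X * _)%E]eq_integral do rewrite -eU.
under eq_bigr do under eq_integral do rewrite -eV.
apply: indep_UV => //.
- apply: (@bounded_fin _ _ _ P _ (if s == 0%N then 1 else s`!%:R / A ^+ s)) => // t.
  case: (hA cn0) => [s0|Ap].
    by rewrite s0 /= /g s0 expr0 mul1r expR_le1 mulNr oppr_le0 mulr_ge0.
  case: eqP => [s0|_]; first by rewrite /g s0 expr0 mul1r expR_le1 mulNr oppr_le0 mulr_ge0.
  exact: pow_exp_bound.
- move=> k; apply: (@bounded_fin _ _ _ P _ ((m k)`!%:R / 1 ^+ m k)) => // t.
  by rewrite /h -[X in expR (- X)]mul1r -mulNr; apply: pow_exp_bound.
Qed.
Unset Implicit Arguments.
Set Strict Implicit.
Theorem proposition4 (d : measure_display) (T : measurableType d) (R : realType)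
  (P : probability T R) (n : nat) (alpha : 'I_n -> R)
  (U : T -> R) (V : 'I_n -> T -> R) (fU : R -> R) (fV : 'I_n -> R -> R)
  (X : 'I_n -> T -> nat) :
  (forall i, 0 <= alpha i) ->
  measurable_fun setT U -> (forall i, measurable_fun setT (V i)) ->
  (forall t, 0 <= U t) -> (forall i t, 0 <= V i t) ->
  mutually_independent P (UV U V) ->
  has_density P U fU -> (forall i, has_density P (V i) (fV i)) ->
  (forall i, measurable_fun setT (X i)) ->
  cond_indep_poisson P (generated_events (UV U V))
    (fun i t => alpha i * U t + V i t) X ->
  forall x : 'I_n -> nat,
    P [set t | forall i, X i t = x i] =
    (((\prod_(i < n) ((x i)`!)%:R)^-1)%:E *
     \sum_(j : {ffun 'I_n -> 'I_(\max_(i < n) x i).+1} | [forall i, (j i <= x i)%N])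
       ((\prod_(i < n) ('C(x i, j i)%:R * alpha i ^+ j i))%:E *
        'E_P[fun t => (U t ^+ (\sum_(i < n) (j i : nat))%N * expR (- (\sum_(i < n) alpha i) * U t))%R] *
        \prod_(k < n) 'E_P[fun t => (V k t ^+ (x k - j k) * expR (- V k t))%R]))%E.
Proof.
move=> a0 mU mV U0 V0 hind _ _ _ hcond x.
have hT : generated_events (UV U V) setT.
  apply: sub_sigma_algebra; exists ord0; exists setT => //.
rewrite -[X in P X]setTI hcond //=.
under eq_integral do rewrite pois_expand.
have mE (f : T -> R) : measurable_fun setT f -> measurable_fun setT (fun t => expR (f t)).
  by move=> mf; apply: measurableT_comp => //.
pose M := (\max_(i < n) x i).+1.
pose coef (j : {ffun 'I_n -> 'I_M}) := \prod_(i < n) ('C(x i, j i)%:R * alpha i ^+ j i).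
pose Tm (j : {ffun 'I_n -> 'I_M}) t := coef j * (U t ^+ (\sum_(i < n) (j i : nat))%N *
   expR (- (\sum_(i < n) alpha i) * U t)) *
      \prod_(k < n) (V k t ^+ (x k - j k) * expR (- V k t)).
have coef0 j : 0 <= coef j by apply: prodr_ge0 => i _; rewrite mulr_ge0 // exprn_ge0.
have A0 : 0 <= \sum_(i < n) alpha i by apply: sumr_ge0.
have mT j : measurable_fun setT (Tm j).
  apply: measurable_funM; first apply: measurable_funM => //.
  - apply: measurable_funM; first exact: measurable_funX.
    by apply: mE; apply: measurable_funM => //.
  - apply: measurable_prod => k _; apply: measurable_funM; first exact: measurable_funX.
    by apply: mE; exact: measurableT_comp.
have T0 j t : 0 <= Tm j t.
  rewrite /Tm; apply: mulr_ge0; first apply: mulr_ge0 => //.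
  - by rewrite mulr_ge0 // ?expR_ge0 // exprn_ge0.
  - by apply: prodr_ge0 => k _; rewrite mulr_ge0 // ?expR_ge0 // exprn_ge0.
under eq_integral do rewrite EFinM.
rewrite ge0_integralZl //; first last.
- by rewrite lee_fin invr_ge0 prodr_ge0.
- by move=> t _; rewrite lee_fin; apply: sumr_ge0 => j _; exact: (T0 j t).
- apply/measurable_EFinP; under eq_fun do rewrite big_mkcond /=.
  apply: measurable_sum => j; case: (boolP [forall i, (j i <= x i)%N]) => _ /=; first [exact: (mT j)|exact: measurable_cst].
congr (_ * _)%E.
under eq_integral do rewrite -sumEFin big_mkcond /=.
rewrite ge0_integral_sum //; first last.
- by move=> j t _; case: ifP => // _; rewrite lee_fin; exact: (T0 j t).
- by move=> j; case: (boolP [forall i, (j i <= x i)%N]) => _ /=; first [apply/measurable_EFinP; exact: (mT j)|exact: measurable_cst].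
rewrite [RHS]big_mkcond /=; apply: eq_bigr => j _; case: ifP => Pj; last by rewrite integral0.
apply: (@term_eq _ _ _ P n U V (coef j)) => //.
move=> cn0; case: (posnP (\sum_(i < n) (j i : nat))%N) => [s0|sp]; [by left | right].
case: (pselect (exists i, (0 < j i)%N)) => [[i ji]|hn]; last first.
  exfalso; move: sp; rewrite big1 // => i _.
  by apply/eqP; rewrite -leqn0 leqNgt; apply/negP => ?; apply: hn; exists i.
have ai : alpha i != 0.
  move/prodf_neq0: cn0 => /(_ i isT); rewrite mulf_eq0 negb_or => /andP[_].
  by rewrite expf_eq0 negb_and ji.
apply: (@lt_le_trans _ _ (alpha i)); first by rewrite lt_def ai a0.
by rewrite (bigD1 i) //= lerDl sumr_ge0.
Qed.
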